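(* Let $N\ge3$, let $G_{2N}=K_2\otimes K_N$, and let $k=N-1$ be the common degree of its vertices. For vertices $i,j$ let $d_{ij}$ be their distance, and let $M^m_{ij}$ be the number of walks of length $m$ from $i$ to $j$ in $G_{2N}$. Then: - if $i\neq j$, $d_{ij}=1$ and $m$ is odd, then $M^m_{ij}=\frac{k^{m}+1}{k+1}$; - if $i\neq j$, $d_{ij}=2$ and $m\ge 2$ is even, then $M^m_{ij}=\frac{k^{m}-1}{k+1}$; - if $i=j$ and $m$ is odd, then $M^m_{ii}=0$; - if $i=j$ and $m\ge2$ is even, then $M^m_{ii}=\frac{k^{m}-1}{k+1}+1$.
   Context: $K_2\otimes K_N$ is the Kronecker (tensor) product of $K_2$ and $K_N$. Its vertex set is $\{1,2\}\times\{1,\dots,N\}$, with $(a,u)\sim(b,v)$ if and only if $a\neq b$ and $u\neq v$. *)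

(* Defs.v *)
From mathcomp Require Import all_boot all_order all_algebra.
Set Implicit Arguments. Unset Strict Implicit. Unset Printing Implicit Defensive.

(* Vertices of K_2 (x) K_N : {1,2} x {1..N}, encoded as bool * 'I_N. *)
Definition vtx (N : nat) : finType := (bool * 'I_N)%type.

Definition kadj (N : nat) : rel (vtx N) :=
  fun x y => (x.1 != y.1) && (x.2 != y.2).

(* Number of walks of length m from i to j: sequences of m steps
   i = x0 ~ x1 ~ ... ~ xm = j, encoded by the tuple (x1,...,xm). *)
Definition walks (N m : nat) (i j : vtx N) : nat :=
  #|[set t : m.-tuple (vtx N) | path (@kadj N) i t && (last i t == j)]|.

Definition is_dist (N : nat) (i j : vtx N) (d : nat) : Prop :=
  (0 < walks d i j)%N /\ forall m, (m < d)%N -> walks m i j = 0%N.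

(* Main.v *)
Require Import Defs.
From mathcomp Require Import all_boot all_order all_algebra zify ring.
Import Num.Theory.
Local Open Scope ring_scope.
Import GRing.Theory.

Lemma walksE N m (i j : vtx N) :
  walks m i j = (\sum_(t : m.-tuple (vtx N)) (path (@kadj N) i t && (last i t == j)))%N.
Proof. by rewrite /walks -sum1dep_card big_mkcond /=; apply: eq_bigr => t _; case: ifP. Qed.

Lemma walks0 N (i j : vtx N) : walks 0 i j = (i == j).
Proof.
rewrite walksE (big_pred1 [tuple]) //= => t. by move: t => [[|? ?] ?] //=; apply/esym/eqP; apply: val_inj.
Qed.

Lemma walksS N m (i j : vtx N) :
  walks m.+1 i j = (\sum_(x | kadj i x) walks m x j)%N.
Proof.
rewrite walksE.
pose f (p : vtx N * m.-tuple (vtx N)) : m.+1.-tuple (vtx N) := [tuple of p.1 :: p.2].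
pose g (t : m.+1.-tuple (vtx N)) := (thead t, behead_tuple t).
have fK : cancel f g by case=> x t; rewrite /f /g /=; congr pair; apply: val_inj.
have gK : cancel g f by move=> t; rewrite /f /g; apply: val_inj => /=; case/tupleP: t.
rewrite (reindex f); last by exists g => ? _.
rewrite -(pair_bigA _ (fun x t => (path (@kadj N) i (f (x, t)) && (last i (f (x, t)) == j)) : nat)) /=.
rewrite [RHS]big_mkcond /=; apply: eq_bigr => x _.
case: ifP => hx; last by rewrite big1 // => t _; rewrite hx.
by rewrite walksE; apply: eq_bigr => t _.
Qed.

Definition pp m (a b : bool) : nat := if odd m then a != b else a == b.
Fixpoint Q (k m : nat) : nat * nat :=
  match m with 0 => (1, 0)%N | m'.+1 => let (d, o) := Q k m' in (k * o, d + (k - 1) * o)%N end.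
Definition qq {N} k m (u v : 'I_N) : nat := if u == v then (Q k m).1 else (Q k m).2.

Lemma QS k m : Q k m.+1 = (k * (Q k m).2, (Q k m).1 + (k - 1) * (Q k m).2)%N.
Proof. by rewrite /=; case: (Q k m). Qed.

Lemma sum_pp m a c : (\sum_(b | b != a) pp m b c)%N = pp m.+1 a c.
Proof.
rewrite (big_pred1 (~~ a)); last by case=> /=; case: a.
by rewrite /pp /=; case: (odd m); case: a; case: c.
Qed.

Lemma sum_qq N m (u w : 'I_N) : (1 <= N)%N ->
  (\sum_(v | v != u) qq (N - 1) m v w)%N = qq (N - 1) m.+1 u w.
Proof.
move=> hN.
have tot : (\sum_v qq (N - 1) m v w)%N = ((Q (N-1) m).1 + (N - 1) * (Q (N-1) m).2)%N.
  rewrite (bigD1 w) //= /qq eqxx; congr addn.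
  rewrite (eq_bigr (fun _ => (Q (N-1) m).2)); last by move=> v /negbTE ->.
  rewrite (eq_bigl (mem (predC1 w))) // sum_nat_const cardC1 card_ord; lia.
have := tot; rewrite (bigD1 u) //= => e.
set S := (\sum_(v | v != u) _)%N in e *.
move: e; rewrite /qq QS /=; case: eqP => [eq|/eqP neq] e.
  lia.
idtac.
have : ((N - 1) * (Q (N - 1) m).2 = (N - 1 - 1) * (Q (N - 1) m).2 + (Q (N - 1) m).2)%N.
  have N2 : (1 < N)%N by move: (ltn_ord u) (ltn_ord w) neq; rewrite -val_eqE /=; lia.
  rewrite addnC -mulSn; f_equal; lia.
lia.
Qed.

Lemma walks_prod N m (i j : vtx N) : (1 <= N)%N ->
  walks m i j = (pp m i.1 j.1 * qq (N - 1) m i.2 j.2)%N.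
Proof.
move=> hN; elim: m i => [|m IH] i.
  rewrite walks0 /pp /qq /=; case: i j => [a u] [b v].
  by rewrite xpair_eqE; case: (a == b); case: (u == v).
rewrite walksS (eq_bigr (fun x => pp m x.1 j.1 * qq (N - 1) m x.2 j.2)%N); last by move=> x _; rewrite IH.
rewrite (eq_bigl (fun x => (x.1 != i.1) && (x.2 != i.2))); last first.
  by move=> x; rewrite /kadj (eq_sym i.1) (eq_sym i.2).
rewrite -(pair_big_dep (fun b => b != i.1) (fun _ v => v != i.2) (fun b v => pp m b j.1 * qq (N - 1) m v j.2)%N) /=.
rewrite -sum_pp -sum_qq // big_distrl /=; apply: eq_bigr => b _; by rewrite big_distrr.
Qed.

Lemma Qclosed k m : (1 <= k)%N ->
  ((Q k m).1%:R * (k + 1)%:R : rat) = k%:R ^+ m + (-1) ^+ m * k%:R /\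
  ((Q k m).2%:R * (k + 1)%:R : rat) = k%:R ^+ m - (-1) ^+ m.
Proof.
move=> hk; elim: m => [|m [IH1 IH2]]; first by rewrite /= expr0 mul1r mul0r natrD; split; ring.
rewrite natrD in IH1 IH2; rewrite QS /= !natrD !natrM natrB // !exprS; split.
  by rewrite -mulrA IH2; ring.
rewrite mulrDl IH1 -mulrA IH2; ring.
Qed.

Lemma divE (x y z : rat) : y != 0 -> x * y = z -> x = z / y.
Proof. by move=> hy <-; rewrite mulfK. Qed.

Theorem lemma7 (N : nat) (hN : (3 <= N)%N) (i j : vtx N) (m : nat) :
  let k := (N - 1)%N in
  [/\ (i != j -> is_dist i j 1 -> odd m ->
        (walks m i j)%:R = ((k ^ m + 1)%N%:R / (k + 1)%N%:R : rat)),
      (i != j -> is_dist i j 2 -> (2 <= m)%N -> ~~ odd m ->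
        (walks m i j)%:R = ((k ^ m - 1)%N%:R / (k + 1)%N%:R : rat)),
      (i = j -> odd m -> walks m i i = 0%N) &
      (i = j -> (2 <= m)%N -> ~~ odd m ->
        (walks m i i)%:R = ((k ^ m - 1)%N%:R / (k + 1)%N%:R + 1 : rat))].
Proof.
move=> k.
have hN1 : (1 <= N)%N by lia.
have hk : (1 <= k)%N by rewrite /k; lia.
have k0 : ((k + 1)%N%:R : rat) != 0 by rewrite addn1 Num.Theory.pnatr_eq0.
have km : forall m, (1 <= k ^ m)%N by move=> n; rewrite expn_gt0; lia.
have [C1 C2] := @Qclosed k m hk.
have sg : ((-1) ^+ m : rat) = if odd m then -1 else 1.
  by rewrite -signr_odd; case: (odd m); rewrite ?expr1 ?expr0.
split.
- move=> _ [d1 _] om; move: d1; rewrite !walks_prod // /pp /qq /= om -/k.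
  case E1: (i.1 == j.1) => //=.
  case E2: (i.2 == j.2); first by rewrite muln0.
  rewrite mul1n => _.
  apply: divE => //; rewrite mul1n C2 sg om natrD natrX; ring.
- move=> ij [d2 d1] _ em; move: (d1 1%N isT) d2; rewrite !walks_prod // /pp /qq /= (negbTE em) -/k.
  case E1: (i.1 == j.1) => /=; last by rewrite mul0n.
  case E2: (i.2 == j.2).
    by move: ij; rewrite -pair_eqE /pair_eq E1 E2.
  move=> _ _; apply: divE => //; rewrite mul1n C2 sg (negbTE em) (natrB _ (km m)) natrX; ring.
- move=> -> om; rewrite walks_prod // /pp om eqxx //.
- move=> -> _ em; rewrite walks_prod // /pp /qq (negbTE em) !eqxx /= mul1n.
  have := C1; rewrite sg (negbTE em) mul1r => C.
  rewrite -/k (@divE _ _ _ k0 C) (natrB _ (km m)) natrX natrD; field; by move: k0; rewrite natrD.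
Qed.
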